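(* Let $p\in(0,1)$, let $X,\gamma$ satisfy the standing assumptions in the context, and let $0\le x_0<\mathbb E[\gamma X]$. Then the problem of minimizing $\mathrm{VaR}_p(g(X))$ over $g\in\mathcal G_{\rm ns}$ admits at least one solution, and $\mathrm{VaR}_p(X)>q$, where $q=\inf\{\mathrm{VaR}_p(g(X)):g\in\mathcal G_{\rm ns}\}$.
   Context: $(\Omega,\mathcal F,\mathbb P)$ is atomless. $\mathrm{VaR}_p(Y)=\inf\{x:\mathbb P(Y\le x)\ge p\}$. Standing assumptions: $X\ge0$ is a random variable whose distribution has a positive density on its support; $\gamma:\mathbb R\to\mathbb R$ is continuous and strictly positive; $\gamma$ also denotes $\gamma(X)$; $\mathbb E[\gamma]=1$, $\mathbb E[\gamma X]<\infty$. With $\mathcal G_1$ the measurable functions $\mathbb R\to\mathbb R$, $\mathcal G_{\rm ns}=\{g\in\mathcal G_1:\mathbb E[\gamma g(X)]\ge x_0,\ 0\le g(X)\le X\}$. *)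

(* Defs.v *)
From HB Require Import structures.
From mathcomp Require Import all_boot all_order all_algebra.
From mathcomp Require Import all_classical all_reals all_analysis.
Set Implicit Arguments. Unset Strict Implicit. Unset Printing Implicit Defensive.
Import Order.TTheory GRing.Theory Num.Theory.
Import numFieldNormedType.Exports.
Local Open Scope classical_set_scope.
Local Open Scope ring_scope.

Definition atomless d (T : measurableType d) (R : realType)
  (P : probability T R) : Prop :=
  forall A : set T, measurable A -> (0 < P A)%E ->
    exists B : set T, [/\ measurable B, B `<=` A, (0 < P B)%E & (P B < P A)%E].

Definition VaR d (T : measurableType d) (R : realType)
  (P : probability T R) (p : R) (Y : T -> R) : R :=
  inf [set x : R | (p%:E <= P (Y @^-1` `]-oo, x]))%E].

Definition support_of d (T : measurableType d) (R : realType)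
  (P : probability T R) (X : T -> R) : set R :=
  [set x | forall e : R, 0 < e -> (0 < P (X @^-1` ball x e))%E].

Definition has_pos_density_on_support d (T : measurableType d) (R : realType)
  (P : probability T R) (X : T -> R) : Prop :=
  exists f : R -> R,
    [/\ measurable_fun setT f, (forall x, 0 <= f x),
        (forall A : set R, measurable A ->
            (P (X @^-1` A) = \int[lebesgue_measure]_(x in A) (f x)%:E)%E)
      & (forall x, support_of P X x -> 0 < f x)].

Definition G_ns d (T : measurableType d) (R : realType)
  (P : probability T R) (X : T -> R) (gamma : R -> R) (x0 : R) : set (R -> R) :=
  [set g | [/\ measurable_fun setT g,
     (x0%:E <= \int[P]_w (gamma (X w) * g (X w))%:E)%E &
     (forall w, 0 <= g (X w) <= X w)]].

(* Main.v *)
Require Import Defs.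
From HB Require Import structures.
From mathcomp Require Import all_boot all_order all_algebra.
From mathcomp Require Import all_classical all_reals all_analysis.
From mathcomp Require Import lra measurable_realfun.
Import Order.TTheory GRing.Theory Num.Theory.
Import numFieldNormedType.Exports.
Local Open Scope classical_set_scope.
Local Open Scope ring_scope.

Lemma lim_geE (R : realType) (u : nat -> \bar R) (l a : \bar R) :
  u @ \oo --> l -> (forall n, (a <= u n)%E) -> (a <= l)%E.
Proof.
move=> ul ua; rewrite -(cvg_lim _ ul) //; apply: lime_ge.
  by apply/cvg_ex; exists l.
by near=> n; apply: ua.
Unshelve. all: by end_near.
Qed.

Lemma lim_leE (R : realType) (u : nat -> \bar R) (l a : \bar R) :
  u @ \oo --> l -> (forall n, (u n <= a)%E) -> (l <= a)%E.
Proof.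
move=> ul ua; rewrite -(cvg_lim _ ul) //; apply: lime_le.
  by apply/cvg_ex; exists l.
by near=> n; apply: ua.
Unshelve. all: by end_near.
Qed.

Lemma gap_below d (T : measurableType d) (R : realType) (P : probability T R)
  (K : R -> set T) (cs m : R) :
  (forall c, measurable (K c)) ->
  (forall c c', c <= c' -> K c `<=` K c') ->
  (forall c, c < cs -> (P (K c) <= m%:E)%E) ->
  (P (\bigcup_n K (cs - n.+1%:R^-1)%R%R) <= m%:E)%E.
Proof.
move=> mK homK Km.
apply: lim_leE; first apply: nondecreasing_cvg_mu.
- by [].
- by apply: bigcup_measurable => n _.
- move=> n k nk; apply/subsetPset; apply: homK.
  rewrite /= lerD2l lerN2 lef_pV2 ?posrE // ?ler_nat //.
- move=> n /=; apply: Km; rewrite ltrBlDr ltrDl invr_gt0 //.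
Qed.

Lemma gap_above d (T : measurableType d) (R : realType) (P : probability T R)
  (K : R -> set T) (cs m : R) :
  (forall c, measurable (K c)) ->
  (forall c c', c <= c' -> K c `<=` K c') ->
  (forall c, cs < c -> (m%:E <= P (K c))%E) ->
  (m%:E <= P (\bigcap_n K (cs + n.+1%:R^-1)%R%R))%E.
Proof.
move=> mK homK Km.
apply: lim_geE; first apply: nonincreasing_cvg_mu.
- by apply: (le_lt_trans (probability_le1 _ _)) => //; rewrite ltry.
- by [].
- by apply: bigcapT_measurable => n.
- move=> n k nk; apply/subsetPset; apply: homK.
  rewrite /= lerD2l lef_pV2 ?posrE // ?ler_nat //.
- move=> n /=; apply: Km; rewrite ltrDl invr_gt0 //.
Qed.

Lemma mpre d (T : measurableType d) d' (U : measurableType d') (f : T -> U) (B : set U) :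
  measurable_fun setT f -> measurable B -> measurable (f @^-1` B).
Proof. by move=> mf mB; rewrite -(setTI (f @^-1` B)); exact: mf measurableT B mB. Qed.

Lemma thr d (T : measurableType d) (R : realType) (P : probability T R)
  (K : R -> set T) (m : R) :
  (forall c, measurable (K c)) ->
  (forall c c', c <= c' -> K c `<=` K c') ->
  [set c | (m%:E <= P (K c))%E] !=set0 ->
  has_lbound [set c | (m%:E <= P (K c))%E] ->
  let cs := inf [set c | (m%:E <= P (K c))%E] in
  [/\ (m%:E <= P (\bigcap_n K (cs + n.+1%:R^-1)%R%R))%E,
      (P (\bigcup_n K (cs - n.+1%:R^-1)%R%R) <= m%:E)%E,
      (forall c, c < cs -> (P (K c) < m%:E)%E),
      (forall c, cs < c -> (m%:E <= P (K c))%E) &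
      (forall c, (m%:E <= P (K c))%E -> cs <= c)].
Proof.
move=> mK homK ne lb cs.
have v : forall c, (m%:E <= P (K c))%E -> cs <= c.
  by move=> c hc; apply: ge_inf.
have iv : forall c, cs < c -> (m%:E <= P (K c))%E.
  move=> c hc; have [y hy yc] := inf_lt ne hc.
  apply: (le_trans hy); apply: le_measure; rewrite ?inE //.
  by apply: homK; apply: ltW.
have iii : forall c, c < cs -> (P (K c) < m%:E)%E.
  move=> c hc; rewrite ltNge; apply/negP => H.
  by move: (v c H); rewrite leNgt hc.
split => //.
- by apply: gap_above => // c hc; apply: iv.
- by apply: gap_below => // c hc; apply: ltW; apply: iii.
Qed.

Lemma cap_le (R : realType) (a cs : R) :
  (forall n : nat, a <= cs + n.+1%:R^-1) -> a <= cs.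
Proof.
move=> h; rewrite leNgt; apply/negP => /ltr_add_invr [k hk].
by move: (h k); rewrite leNgt hk.
Qed.

Lemma cup_lt (R : realType) (a cs : R) :
  (exists n : nat, a <= cs - n.+1%:R^-1) <-> a < cs.
Proof.
split.
  move=> [n hn]; apply: (le_lt_trans hn); rewrite ltrBlDr ltrDl invr_gt0 //.
move=> /ltr_add_invr [k hk]; exists k; rewrite lerBrDr; exact: ltW.
Qed.

Lemma nat_ub (R : realType) (x : R) : exists n : nat, x <= n%:R.
Proof.
case: (lerP 0 x) => hx.
  by exists (Num.bound x); apply: ltW; apply: archi_boundP.
by exists 0%N; apply: ltW.
Qed.

Lemma itvP (T : Type) (R : realType) (Y : T -> R) c w :
  (Y @^-1` `]-oo, c]) w <-> Y w <= c.
Proof. by rewrite /preimage /= in_itv /=. Qed.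

Lemma VaR_props d (T : measurableType d) (R : realType) (P : probability T R)
  (Y : T -> R) (p : R) :
  measurable_fun setT Y -> (forall w, 0 <= Y w) -> 0 < p < 1 ->
  let v := VaR P p Y in
  [/\ 0 <= v, (p%:E <= P (Y @^-1` `]-oo, v]))%E,
     (forall c, c < v -> (P (Y @^-1` `]-oo, c]) < p%:E)%E),
     (forall c, v < c -> (p%:E <= P (Y @^-1` `]-oo, c]))%E) &
     (forall c, (p%:E <= P (Y @^-1` `]-oo, c]))%E -> v <= c)].
Proof.
move=> mY Y0 /andP[p0 p1] v.
have mK : forall c, measurable (Y @^-1` `]-oo, c]).
  by move=> c; apply: mpre.
have homK : forall c c' : R, c <= c' -> Y @^-1` `]-oo, c] `<=` Y @^-1` `]-oo, c'].
  by move=> c c' cc' w /itvP h; apply/itvP; apply: le_trans cc'.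
have ne : [set c | (p%:E <= P (Y @^-1` `]-oo, c]))%E] !=set0.
  apply: contrapT => H.
  have : (P (\bigcup_n (Y @^-1` `]-oo, n%:R])) <= p%:E)%E.
    apply: lim_leE; first apply: nondecreasing_cvg_mu.
    - by [].
    - by apply: bigcup_measurable => n _.
    - by move=> n k nk; apply/subsetPset; apply: homK; rewrite ler_nat.
    move=> n /=; apply: ltW; rewrite ltNge; apply/negP => Hn.
    by apply: H; exists n%:R.
  have -> : \bigcup_n (Y @^-1` `]-oo, n%:R]) = setT.
    apply/seteqP; split => // w _; have [n hn] := nat_ub _ (Y w).
    by exists n => //; apply/itvP.
  by rewrite probability_setT lee_fin leNgt p1.
have lb : lbound [set c | (p%:E <= P (Y @^-1` `]-oo, c]))%E] 0.
  move=> c /= hc; rewrite leNgt; apply/negP => c0.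
  have : Y @^-1` `]-oo, c] = set0.
    apply/seteqP; split => // w /itvP h.
    by move: (lt_le_trans (le_lt_trans (Y0 w) (le_lt_trans h c0)) (lexx 0)); rewrite ltxx.
  by move=> E; move: hc; rewrite E measure0 lee_fin leNgt p0.
have lb' : has_lbound [set c | (p%:E <= P (Y @^-1` `]-oo, c]))%E] by exists 0.
have [i ii iii iv vv] := thr _ _ _ _ _ _ mK homK ne lb'.
split => //.
- by apply: lb_le_inf.
- move: i; congr (_ <= P _)%E; apply/seteqP; split => w.
    by move=> h; apply/itvP; apply: cap_le => n; apply/itvP; apply: h.
  by move=> /itvP h n _; apply/itvP; apply: le_trans h _; rewrite lerDl invr_ge0.
Qed.

Lemma split_set d (T : measurableType d) (R : realType) (P : probability T R)
  (Y : T -> R) (E : set T) (m : R) :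
  measurable_fun setT Y -> measurable E ->
  (forall t, P (Y @^-1` [set t]) = 0%E) -> 0 <= m -> (m%:E <= P E)%E ->
  exists B : set R, measurable B /\ P (E `&` Y @^-1` B) = m%:E.
Proof.
move=> mY mE Y1 m0 mE1.
case: (eqVneq m 0) => [->|mn0].
  by exists set0; split => //; rewrite preimage_set0 setI0 measure0.
case: (eqVneq (m%:E) (P E)) => [->|mPE].
  by exists setT; split => //; rewrite preimage_setT setIT.
have mpos : 0 < m by rewrite lt_neqAle eq_sym mn0 m0.
have mlt : (m%:E < P E)%E by rewrite lt_neqAle mPE mE1.
pose K c := E `&` Y @^-1` `]-oo, c].
have mK : forall c, measurable (K c).
  by move=> c; apply: measurableI => //; apply: mpre.
have homK : forall c c' : R, c <= c' -> K c `<=` K c'.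
  by move=> c c' cc' w [Ew /itvP h]; split => //; apply/itvP; apply: le_trans cc'.
have ne : [set c | (m%:E <= P (K c))%E] !=set0.
  apply: contrapT => H.
  have : (P (\bigcup_n (K n%:R)) <= m%:E)%E.
    apply: lim_leE; first apply: nondecreasing_cvg_mu.
    - by [].
    - by apply: bigcup_measurable => n _.
    - by move=> n k nk; apply/subsetPset; apply: homK; rewrite ler_nat.
    move=> n /=; apply: ltW; rewrite ltNge; apply/negP => Hn.
    by apply: H; exists n%:R.
  have -> : \bigcup_n (K n%:R) = E.
    apply/seteqP; split => w; first by move=> [n _ []].
    move=> Ew; have [n hn] := nat_ub _ (Y w).
    by exists n => //; split => //; apply/itvP.
  by rewrite leNgt mlt.
have [t0 ht0] : exists t0, (P (K t0) < m%:E)%E.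
  apply: contrapT => H.
  have : (m%:E <= P (\bigcap_n (K (- n%:R)%R)))%E.
    apply: lim_geE; first apply: nonincreasing_cvg_mu.
    - by apply: (le_lt_trans (probability_le1 _ _)) => //; rewrite ltry.
    - by [].
    - by apply: bigcapT_measurable => n.
    - by move=> n k nk; apply/subsetPset; apply: homK; rewrite lerN2 ler_nat.
    move=> n /=; rewrite leNgt; apply/negP => Hn.
    by apply: H; exists (- n%:R).
  have -> : \bigcap_n (K (- n%:R)%R) = set0.
    apply/seteqP; split => // w Hw; have [n hn] := nat_ub _ (- Y w + 1).
    have [_ /itvP h] := Hw n I.
    exfalso; lra.
  by rewrite measure0 lee_fin leNgt mpos.
have lb : has_lbound [set c | (m%:E <= P (K c))%E].
  exists t0 => c /= hc; rewrite leNgt; apply/negP => ct.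
  have : (P (K c) <= P (K t0))%E by apply: le_measure; rewrite ?inE //; apply: homK; apply: ltW.
  by rewrite leNgt (lt_le_trans ht0 hc).
have [i ii _ _ _] := thr _ _ _ _ _ _ mK homK ne lb.
set cs := inf _ in i ii.
exists [set` `]-oo, cs]]; split => //.
have capE : \bigcap_n K (cs + n.+1%:R^-1)%R = K cs.
  apply/seteqP; split => w.
    move=> h; have [Ew _] := h 0%N I; split => //.
    by apply/itvP; apply: cap_le => n; have [_ /itvP] := h n I.
  move=> [Ew /itvP h] n _; split => //; apply/itvP; apply: le_trans h _.
  by rewrite lerDl invr_ge0.
rewrite capE in i.
apply/le_anti; rewrite i andbT.
apply: (le_trans _ ii).
have mU : measurable (\bigcup_n K (cs - n.+1%:R^-1)%R).
  by apply: bigcup_measurable => n _.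
have mS : measurable (Y @^-1` [set cs]) by apply: mpre.
apply: (le_trans (y := P (\bigcup_n K (cs - n.+1%:R^-1)%R `|` Y @^-1` [set cs]))).
  apply: le_measure; [rewrite inE; exact: mK| rewrite inE; exact: measurableU mU mS|].
  move=> w [Ew /itvP h]; case: (eqVneq (Y w) cs) => [e|ne'].
    by right.
  left; have : Y w < cs by rewrite lt_neqAle ne' h.
  move=> /cup_lt [n hn]; exists n => //; split => //; exact/itvP.
have h2 : (P (\bigcup_n K (cs - n.+1%:R^-1)%R `|` Y @^-1` [set cs]) <=
   P (\bigcup_n K (cs - n.+1%:R^-1)%R) + P (Y @^-1` [set cs]))%E := measureU2 P mU mS.
by rewrite Y1 adde0 in h2.
Qed.

Lemma Pfin d (T : measurableType d) (R : realType) (P : probability T R) (A : set T) :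
  measurable A -> exists r : R, P A = r%:E.
Proof. by move=> mA; exists (fine (P A)); rewrite fineK //; apply: fin_num_measure. Qed.

Lemma NP d (T : measurableType d) (R : realType) (P : probability T R)
  (X : T -> R) (h : R -> R) (p : R) :
  measurable_fun setT X -> measurable_fun setT h -> (forall x, 0 <= h x) ->
  (forall t, P (X @^-1` [set t]) = 0%E) -> 0 < p < 1 ->
  exists (B : set R) (cs : R), [/\ measurable B, P (X @^-1` B) = p%:E, 0 <= cs,
     (forall x, h x < cs -> B x) & (forall x, B x -> h x <= cs)].
Proof.
move=> mX mh h0 X1 /andP[p0 p1].
pose Y := h \o X.
have mY : measurable_fun setT Y by apply: measurableT_comp.
have [cs0 Pcs below _ _] := VaR_props _ _ _ P Y p mY (fun w => h0 (X w)) (ltac:(by apply/andP; split)).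
set cs := VaR P p Y in cs0 Pcs below.
pose L := h @^-1` `]-oo, cs[.
have mL : measurable L by apply: mpre.
have mXL : measurable (X @^-1` L) by apply: mpre.
have ltp : (P (X @^-1` L) <= p%:E)%E.
  have := gap_below _ _ _ P (fun c => Y @^-1` `]-oo, c]) cs p.
  move=> /(_ (fun c => mpre _ _ _ _ _ _ mY (measurable_itv _))).
  have homK : forall c c' : R, c <= c' -> Y @^-1` `]-oo, c] `<=` Y @^-1` `]-oo, c'].
    by move=> c c' cc' w /itvP hh; apply/itvP; apply: le_trans cc'.
  move=> /(_ homK) /(_ (fun c hc => ltW (below c hc))).
  congr (P _ <= _)%E; apply/seteqP; split => w.
    by move=> [n _ /itvP hn]; rewrite /L /preimage /= in_itv /=; apply/cup_lt; exists n.
  rewrite /L /preimage /= in_itv /= => /cup_lt [n hn]; exists n => //; exact/itvP.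
pose Eq := X @^-1` (h @^-1` [set cs]).
have mEq : measurable Eq by apply: mpre => //; apply: mpre.
have [a Pa] := Pfin _ _ _ P _ mXL.
have [e Pe] := Pfin _ _ _ P _ mEq.
have a0 : 0 <= a by rewrite -lee_fin -Pa.
have ap : a <= p by rewrite -lee_fin -Pa.
have decomp : Y @^-1` `]-oo, cs] = X @^-1` L `|` Eq.
  apply/seteqP; split => w.
    move=> /itvP; rewrite le_eqVlt => /orP[/eqP e'|lt].
      by right.
    by left; rewrite /L /preimage /= in_itv /=.
  case=> [|e']; last by apply/itvP; rewrite /Y /= e'.
  by rewrite /L /preimage /= in_itv /= => hh; apply/itvP; apply: ltW.
have disj : X @^-1` L `&` Eq = set0.
  apply/seteqP; split => // w [].
  by rewrite /L /Eq /preimage /= in_itv /= => hh e'; move: hh; rewrite e' ltxx.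
have PU : P (X @^-1` L `|` Eq) = (P (X @^-1` L) + P Eq)%E := measureU P mXL mEq disj.
have mE : ((p - a)%:E <= P Eq)%E.
  move: Pcs; rewrite decomp PU Pa Pe -EFinD !lee_fin; lra.
have [B' [mB' PB']] := split_set _ _ _ P X Eq (p - a) mX mEq X1 (ltac:(by rewrite subr_ge0)) mE.
exists (L `|` (h @^-1` [set cs] `&` B')), cs; split => //.
- apply: measurableU => //; apply: measurableI => //; exact: mpre.
- have -> : X @^-1` (L `|` (h @^-1` [set cs] `&` B')) = X @^-1` L `|` (Eq `&` X @^-1` B').
    by rewrite preimage_setU preimage_setI.
  have mI : measurable (Eq `&` X @^-1` B') by apply: measurableI => //; apply: mpre.
  have disj2 : X @^-1` L `&` (Eq `&` X @^-1` B') = set0.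
    by rewrite setIA disj set0I.
  have PU2 : P (X @^-1` L `|` (Eq `&` X @^-1` B')) = (P (X @^-1` L) + P (Eq `&` X @^-1` B'))%E
    := measureU P mXL mI disj2.
  by rewrite PU2 PB' Pa -EFinD; congr (_%:E); lra.
- by move=> x hx; left; rewrite /L /preimage /= in_itv /=.
- move=> x [|[]]; rewrite /L /preimage /= ?in_itv /=; first by move=> /ltW.
  by move=> ->.
Qed.

Lemma fin_bet (R : realType) (I : \bar R) (c : R) :
  (0 <= I)%E -> (I <= c%:E)%E -> exists r : R, I = r%:E.
Proof. by case: I => [r||] //; exists r. Qed.

Lemma intD d (T : measurableType d) (R : realType) (P : probability T R) (u v : T -> R) :
  measurable_fun setT u -> measurable_fun setT v ->
  (forall w, 0 <= u w) -> (forall w, 0 <= v w) ->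
  (\int[P]_w (u w + v w)%:E = \int[P]_w (u w)%:E + \int[P]_w (v w)%:E)%E.
Proof.
move=> mu mv u0 v0.
under eq_integral do rewrite EFinD.
apply: ge0_integralD => //.
- by move=> w _; rewrite lee_fin.
- exact/measurable_EFinP.
- by move=> w _; rewrite lee_fin.
- exact/measurable_EFinP.
Qed.

Lemma intle d (T : measurableType d) (R : realType) (P : probability T R) (u v : T -> R) :
  measurable_fun setT u -> measurable_fun setT v ->
  (forall w, 0 <= u w) -> (forall w, u w <= v w) ->
  (\int[P]_w (u w)%:E <= \int[P]_w (v w)%:E)%E.
Proof.
move=> mu mv u0 uv.
apply: ge0_le_integral => //.
- by move=> w _; rewrite lee_fin.
- exact/measurable_EFinP.
- exact/measurable_EFinP.
- by move=> w _; rewrite lee_fin.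
Qed.

Lemma int_ge0 d (T : measurableType d) (R : realType) (P : probability T R) (u : T -> R) :
  (forall w, 0 <= u w) -> (0 <= \int[P]_w (u w)%:E)%E.
Proof. by move=> u0; apply: integral_ge0 => w _; rewrite lee_fin. Qed.

Lemma intZ d (T : measurableType d) (R : realType) (P : probability T R) (k : R) (u : T -> R) :
  0 <= k -> measurable_fun setT u -> (forall w, 0 <= u w) ->
  (\int[P]_w (k * u w)%:E = k%:E * \int[P]_w (u w)%:E)%E.
Proof.
move=> k0 mu u0.
under eq_integral do rewrite EFinM.
apply: ge0_integralZl_EFin => //.
- by move=> w _; rewrite lee_fin.
- exact/measurable_EFinP.
Qed.

Lemma intind d (T : measurableType d) (R : realType) (P : probability T R) (X : T -> R) (B : set R) :
  measurable_fun setT X -> measurable B ->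
  (\int[P]_w (\1_B (X w))%:E = P (X @^-1` B))%E.
Proof.
move=> mX mB.
rewrite (eq_integral (fun w => (\1_(X @^-1` B) w)%:E)); last first.
  by move=> w _; rewrite /indic /preimage.
by rewrite integral_indic // ?setIT //; apply: mpre.
Qed.

Lemma minE2 (R : realType) (a b : R) :
  (Order.min a b = a /\ a <= b) \/ (Order.min a b = b /\ b <= a).
Proof. by case: (lerP a b) => h; [left|right]; split => //; apply: ltW. Qed.

Lemma maxE2 (R : realType) (a b : R) :
  (Order.max a b = b /\ a <= b) \/ (Order.max a b = a /\ b <= a).
Proof. by case: (lerP a b) => h; [left|right]; split => //; apply: ltW. Qed.

Lemma indic01 (R : realType) (B : set R) x :
  (\1_B x = 1 :> R /\ B x) \/ (\1_B x = 0 :> R /\ ~ B x).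
Proof.
rewrite /indic; case: (boolP (x \in B)) => h.
  by left; split => //; apply: set_mem.
by right; split => //; move=> Bx; move: h; rewrite (mem_set Bx).
Qed.

Lemma dens_atomless d (T : measurableType d) (R : realType) (P : probability T R) (X : T -> R) :
  has_pos_density_on_support P X -> forall t, P (X @^-1` [set t]) = 0%E.
Proof.
move=> [f [mf f0 hf _]] t; rewrite hf //.
apply: null_set_integral => //.
  by apply/measurable_EFinP; apply: measurable_funS mf.
exact: lebesgue_measure_set1.
Qed.

Lemma leE_l (R : realType) (a b c : \bar R) : a = b -> (a <= c)%E -> (b <= c)%E.
Proof. by move=> <-. Qed.

Lemma leE_r (R : realType) (a b c : \bar R) : c = b -> (a <= c)%E -> (a <= b)%E.
Proof. by move=> <-. Qed.

Lemma mgd_lemma (R : realType) (a b : R) :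
  measurable_fun setT (fun x : R => x - Order.min (Order.max (x - a) 0) b).
Proof.
apply: measurable_funB; first exact: measurable_id.
apply: measurable_minr; last exact: measurable_cst.
apply: measurable_maxr; last exact: measurable_cst.
apply: measurable_funB; first exact: measurable_id.
exact: measurable_cst.
Qed.

Lemma mh_lemma (R : realType) (gamma : R -> R) (a : R) :
  measurable_fun setT gamma ->
  measurable_fun setT (fun x : R => gamma x * Order.max (x - a) 0).
Proof.
move=> mg; apply: measurable_funM => //.
apply: measurable_maxr; last exact: measurable_cst.
apply: measurable_funB; first exact: measurable_id.
exact: measurable_cst.
Qed.

Lemma mgs_lemma (R : realType) (a : R) (B : set R) : measurable B ->
  measurable_fun setT (fun x : R => x - Order.max (x - a) 0 * \1_B x).
Proof.
move=> mB; apply: measurable_funB; first exact: measurable_id.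
apply: measurable_funM; last exact: measurable_indic.
apply: measurable_maxr; last exact: measurable_cst.
apply: measurable_funB; first exact: measurable_id.
exact: measurable_cst.
Qed.

Lemma eq_le_helper (R : realType) (a b : \bar R) : a = b -> (a <= b)%E.
Proof. by move=> ->. Qed.

Theorem lemma1 (d : measure_display) (T : measurableType d) (R : realType)
  (P : probability T R) (X : T -> R) (gamma : R -> R) (p x0 : R) :
  atomless P ->
  measurable_fun setT X ->
  (forall w, 0 <= X w) ->
  has_pos_density_on_support P X ->
  continuous gamma ->
  (forall x, 0 < gamma x) ->
  (\int[P]_w (gamma (X w))%:E = 1)%E ->
  P.-integrable setT (fun w => (gamma (X w) * X w)%:E) ->
  0 < p < 1 ->
  0 <= x0 ->
  (x0%:E < \int[P]_w (gamma (X w) * X w)%:E)%E ->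
  (exists gstar, G_ns P X gamma x0 gstar /\
     forall g, G_ns P X gamma x0 g ->
       VaR P p (fun w => gstar (X w)) <= VaR P p (fun w => g (X w)))
  /\ inf [set VaR P p (fun w => g (X w)) | g in G_ns P X gamma x0] < VaR P p X.
Proof.
move=> al mX X0 dens cg g0 Eg1 intgX hp x0ge x0lt.
have X1 := dens_atomless _ _ _ P X dens.
have mg : measurable_fun setT gamma := continuous_measurable_fun cg.
have mgX : measurable_fun setT (fun w => gamma (X w)) := measurableT_comp mg mX.
have gX0 : forall w, 0 <= gamma (X w) by move=> w; apply: ltW.
have mgXX : measurable_fun setT (fun w => gamma (X w) * X w) by apply: measurable_funM.
have [EX hEX] : exists EX : R, (\int[P]_w (gamma (X w) * X w)%:E = EX%:E)%E.
  by exists (fine (\int[P]_w (gamma (X w) * X w)%:E)%E); rewrite fineK //; exact: integrable_fin_num intgX.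
rewrite hEX in x0lt; have x0EX : x0 < EX by rewrite -lte_fin.
have intgam : forall k, 0 <= k -> (\int[P]_w (k * gamma (X w))%:E = k%:E)%E.
  by move=> k k0; rewrite intZ // Eg1 mule1.
pose G := G_ns P X gamma x0.
have VaRg : forall g, G g -> let v := VaR P p (fun w => g (X w)) in
  [/\ 0 <= v, (p%:E <= P ((fun w => g (X w)) @^-1` `]-oo, v]))%E,
     (forall c, c < v -> (P ((fun w => g (X w)) @^-1` `]-oo, c]) < p%:E)%E),
     (forall c, v < c -> (p%:E <= P ((fun w => g (X w)) @^-1` `]-oo, c]))%E) &
     (forall c, (p%:E <= P ((fun w => g (X w)) @^-1` `]-oo, c]))%E -> v <= c)].
  move=> g [mg' _ hg]; apply: VaR_props => //.
    exact: measurableT_comp.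
  by move=> w; case/andP: (hg w).
have Gid : G (fun x => x).
  split => //; first by rewrite hEX lee_fin ltW.
  by move=> w; rewrite lexx X0.
pose S := [set VaR P p (fun w => g (X w)) | g in G].
have Sne : S !=set0 by exists (VaR P p X); exists (fun x => x).
have Slb : lbound S 0 by move=> _ [g Gg <-]; have [] := VaRg g Gg.
have Shl : has_lbound S by exists 0.
have q0 : 0 <= inf S := lb_le_inf Sne Slb.
have qle : forall g, G g -> inf S <= VaR P p (fun w => g (X w)).
  by move=> g Gg; apply: ge_inf => //; exists g.
rewrite -/G -/S.
set q := inf S in q0 qle *.
split.
  pose h := fun x : R => gamma x * Order.max (x - q) 0.
  have mh : measurable_fun setT h by exact: mh_lemma.
  have h0 : forall x, 0 <= h x.
    by move=> x; apply: mulr_ge0; [apply: ltW | rewrite le_max lexx orbT].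
  have hleX : forall x, 0 <= x -> h x <= gamma x * x.
    move=> x x0'; apply: ler_wpM2l; first exact: ltW.
    have [[e1 h1]|[e1 h1]] := maxE2 _ (x - q) 0; rewrite e1; lra.
  have [B [cs [mB PB cs0 hlt hle]]] := NP _ _ _ P X h p mX mh h0 X1 hp.
  have mhX : measurable_fun setT (fun w => h (X w)) := measurableT_comp mh mX.
  have mind : forall B0 : set R, measurable B0 -> measurable_fun setT (fun w => (\1_B0 (X w) : R)).
    move=> B0 mB0; apply: (measurableT_comp (f := fun x => (\1_B0 x : R))) => //.
    exact: measurable_indic.
  have ind0 : forall (B0 : set R) x, 0 <= (\1_B0 x : R).
    by move=> B0 x; have [[-> _]|[-> _]] := indic01 _ B0 x.
  have ind1 : forall (B0 : set R) x, (\1_B0 x : R) <= 1.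
    by move=> B0 x; have [[-> _]|[-> _]] := indic01 _ B0 x.
  have hBfacts : forall B0 : set R, measurable B0 ->
      [/\ measurable_fun setT (fun w => h (X w) * \1_B0 (X w)),
          (forall w, 0 <= h (X w) * \1_B0 (X w)) &
          exists r : R, (\int[P]_w (h (X w) * \1_B0 (X w))%:E = r%:E)%E].
    move=> B0 mB0.
    have m1 : measurable_fun setT (fun w => h (X w) * \1_B0 (X w)).
      by apply: measurable_funM => //; apply: mind.
    have p1 : forall w, 0 <= h (X w) * \1_B0 (X w) by move=> w; apply: mulr_ge0.
    split => //; apply: (fin_bet _ _ EX); first exact: int_ge0.
    rewrite -hEX; apply: intle => // w.
    apply: (le_trans (y := h (X w))); last exact: hleX.
    by rewrite -[leRHS]mulr1; apply: ler_wpM2l.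
  have intcs : forall B0 : set R, measurable B0 ->
      (\int[P]_w (cs * \1_B0 (X w))%:E = cs%:E * P (X @^-1` B0))%E.
    by move=> B0 mB0; rewrite intZ // ?intind //; apply: mind.
  have [mhB hB0 [Ir hIr]] := hBfacts B mB.
  have key : Ir <= EX - x0.
    apply/ler_addgt0Pr => e e0.
    have qe : q < q + e by rewrite ltrDl.
    have [s [g Gg <-] slt] := inf_lt Sne qe.
    have [_ _ _ iv _] := VaRg g Gg.
    have Pg := iv _ slt.
    case: (Gg) => mgg intg hg.
    pose B' := g @^-1` `]-oo, q + e].
    have mB' : measurable B' by apply: mpre.
    have PB' : (p%:E <= P (X @^-1` B'))%E := Pg.
    have [pr' hpr'] := Pfin _ _ _ P _ (mpre _ _ _ _ _ _ mX mB').
    have ppr : p <= pr' by rewrite -lee_fin -hpr'.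
    have [mhB' hB0' [I'r hI'r]] := hBfacts B' mB'.
    have np : (\int[P]_w (h (X w) * \1_B (X w) + cs * \1_B' (X w))%:E <=
               \int[P]_w (h (X w) * \1_B' (X w) + cs * \1_B (X w))%:E)%E.
      apply: intle => //.
      - apply: measurable_funD => //; apply: measurable_funM; [exact: measurable_cst|exact: mind].
      - apply: measurable_funD => //; apply: measurable_funM; [exact: measurable_cst|exact: mind].
      - by move=> w; apply: addr_ge0 => //; apply: mulr_ge0.
      move=> w.
      have := hle (X w); have := hlt (X w).
      have [[e1 b1]|[e1 b1]] := indic01 _ B (X w); have [[e2 b2]|[e2 b2]] := indic01 _ B' (X w);
        rewrite e1 e2 ?mulr1 ?mulr0 ?addr0 ?add0r //.
      + by move=> _ /(_ b1).
      + move=> hl _; rewrite leNgt; apply/negP => /hl; exact: b1.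
    have mcs : forall B0 : set R, measurable B0 -> measurable_fun setT (fun w => cs * \1_B0 (X w)).
      by move=> B0 mB0; apply: measurable_funM; [exact: measurable_cst|exact: mind].
    have cs0' : forall (B0 : set R) w, 0 <= cs * \1_B0 (X w) by move=> B0 w; apply: mulr_ge0.
    rewrite (intD _ _ _ P _ _ mhB (mcs _ mB') hB0 (cs0' _)) in np.
    rewrite (intD _ _ _ P _ _ mhB' (mcs _ mB) hB0' (cs0' _)) in np.
    rewrite !intcs // hIr hI'r hpr' PB -!EFinM -!EFinD lee_fin in np.
    have cpp : cs * p <= cs * pr' by apply: ler_wpM2l.
    have mgX' : measurable_fun setT (fun w => gamma (X w) * g (X w)).
      by apply: measurable_funM => //; apply: measurableT_comp.
    have gg0 : forall w, 0 <= gamma (X w) * g (X w).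
      by move=> w; apply: mulr_ge0 => //; case/andP: (hg w).
    have [Ig hIg] : exists r : R, (\int[P]_w (gamma (X w) * g (X w))%:E = r%:E)%E.
      apply: (fin_bet _ _ EX); first exact: int_ge0.
      rewrite -hEX; apply: intle => // w.
      by apply: ler_wpM2l => //; case/andP: (hg w).
    have x0Ig : x0 <= Ig by rewrite -lee_fin -hIg.
    have ineq2 : (\int[P]_w (h (X w) * \1_B' (X w) + gamma (X w) * g (X w))%:E <=
                  \int[P]_w (gamma (X w) * X w + e * gamma (X w))%:E)%E.
      apply: intle => //.
      - by apply: measurable_funD.
      - apply: measurable_funD => //; apply: measurable_funM => //; exact: measurable_cst.
      - by move=> w; apply: addr_ge0.
      move=> w; rewrite /h -mulrA -mulrDr (mulrC e) -mulrDr.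
      apply: ler_wpM2l => //.
      have /andP[gw1 gw2] := hg w.
      have [[e2 b2]|[e2 b2]] := indic01 _ B' (X w); rewrite e2 ?mulr1 ?mulr0.
        move: b2 => /itvP b2.
        have [[e1 h1]|[e1 h1]] := maxE2 _ (X w - q) 0; rewrite e1; lra.
      lra.
    have ee0 : forall w, 0 <= e * gamma (X w) by move=> w; apply: mulr_ge0 => //; apply: ltW.
    have mee : measurable_fun setT (fun w => e * gamma (X w)).
      by apply: measurable_funM => //; exact: measurable_cst.
    have gXX0 : forall w, 0 <= gamma (X w) * X w by move=> w; apply: mulr_ge0.
    rewrite (intD _ _ _ P _ _ mhB' mgX' hB0' gg0) in ineq2.
    rewrite (intD _ _ _ P _ _ mgXX mee gXX0 ee0) in ineq2.
    rewrite (intgam _ (ltW e0)) hI'r hIg in ineq2.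
    have ineq3 := leE_r _ _ _ _ (f_equal (fun z => (z + e%:E)%E) hEX) ineq2.
    rewrite -!EFinD lee_fin in ineq3.
    lra.
  pose gs := fun x : R => x - Order.max (x - q) 0 * \1_B x.
  have mgs : measurable_fun setT gs by exact: mgs_lemma.
  have gsP : forall x, 0 <= x -> [/\ 0 <= gs x, gs x <= x & (B x -> gs x <= q)].
    move=> x x0'; rewrite /gs.
    have [[e2 b2]|[e2 b2]] := indic01 _ B x; rewrite e2 ?mulr1 ?mulr0.
      have [[e1 h1]|[e1 h1]] := maxE2 _ (x - q) 0; rewrite e1; split; lra.
    by split => //; rewrite subr0 // lexx.
  have mgsX : measurable_fun setT (fun w => gamma (X w) * gs (X w)).
    by apply: measurable_funM => //; apply: measurableT_comp.
  have gs0 : forall w, 0 <= gamma (X w) * gs (X w).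
    by move=> w; apply: mulr_ge0 => //; have [] := gsP _ (X0 w).
  have Ggs : G gs.
    split => //; last by move=> w; have [h1 h2 _] := gsP _ (X0 w); rewrite h1 h2.
    have eqI : (\int[P]_w (gamma (X w) * gs (X w) + h (X w) * \1_B (X w))%:E =
                \int[P]_w (gamma (X w) * X w)%:E)%E.
      apply: eq_integral => w _; congr (_%:E).
      by rewrite /gs /h mulrBr mulrA subrK.
    rewrite (intD _ _ _ P _ _ mgsX mhB gs0 hB0) hIr in eqI.
    have [rg hrg] : exists r : R, (\int[P]_w (gamma (X w) * gs (X w))%:E = r%:E)%E.
      apply: (fin_bet _ _ EX); first exact: int_ge0.
      rewrite -hEX; apply: intle => // w.
      by apply: ler_wpM2l => //; have [] := gsP _ (X0 w).
    rewrite hrg -EFinD in eqI.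
    have eq2 := leE_l _ _ _ _ hEX (eq_le_helper _ _ _ (esym eqI)).
    rewrite lee_fin in eq2.
    by rewrite hrg lee_fin; lra.
  exists gs; split => // g Gg.
  apply: le_trans (qle g Gg).
  have [_ _ _ _ vv] := VaRg gs Ggs; apply: vv.
  rewrite -PB; apply: le_measure; rewrite ?inE.
  - exact: mpre.
  - by apply: mpre => //; apply: measurableT_comp.
  move=> w Bw; apply/itvP; have [_ _ h3] := gsP _ (X0 w); exact: h3.
have [v0 Pv _ _ vle] := VaR_props _ _ _ P X p mX X0 hp.
set v := VaR P p X in v0 Pv vle *.
have vpos : 0 < v.
  rewrite lt_neqAle v0 andbT; apply/eqP => v0'.
  have E : X @^-1` `]-oo, v] = X @^-1` [set 0].
    apply/seteqP; split => w; rewrite /preimage /= ?in_itv /= -v0'.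
      by move=> h; apply/le_anti; rewrite h X0.
    by move=> ->.
  move: Pv; rewrite E X1 lee_fin leNgt; case/andP: hp => -> //.
pose dl := Order.min v (EX - x0).
have dl0 : 0 < dl by rewrite /dl lt_min vpos subr_gt0 x0EX.
have dlv : dl <= v by rewrite /dl ge_min lexx.
have dlE : dl <= EX - x0 by rewrite /dl ge_min lexx orbT.
pose gd := fun x : R => x - Order.min (Order.max (x - (v - dl)) 0) dl.
have gdP : forall x, 0 <= x -> [/\ 0 <= gd x, gd x <= x, x - dl <= gd x & (x <= v -> gd x <= v - dl)].
  move=> x x0'; rewrite /gd.
  have [[e1 h1]|[e1 h1]] := maxE2 _ (x - (v - dl)) 0; rewrite e1;
  [have [[e2 h2]|[e2 h2]] := minE2 _ 0 dl | have [[e2 h2]|[e2 h2]] := minE2 _ (x - (v - dl)) dl];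
  rewrite e2; split; lra.
have mgd : measurable_fun setT gd.
  exact: mgd_lemma.
have mgdX : measurable_fun setT (fun w => gd (X w)) := measurableT_comp mgd mX.
have Ggd : G gd.
  split => //; last by move=> w; have [h1 h2 _ _] := gdP _ (X0 w); rewrite h1 h2.
  have mI : measurable_fun setT (fun w => gamma (X w) * gd (X w)) by apply: measurable_funM.
  have I0 : forall w, 0 <= gamma (X w) * gd (X w).
    by move=> w; apply: mulr_ge0 => //; have [] := gdP _ (X0 w).
  have [r hr] : exists r : R, (\int[P]_w (gamma (X w) * gd (X w))%:E = r%:E)%E.
    apply: (fin_bet _ _ EX); first exact: int_ge0.
    rewrite -hEX; apply: intle => // w.
    by apply: ler_wpM2l => //; have [] := gdP _ (X0 w).
  have h : (\int[P]_w (gamma (X w) * X w)%:E <=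
            \int[P]_w (gamma (X w) * gd (X w) + dl * gamma (X w))%:E)%E.
    apply: intle => //.
    - apply: measurable_funD => //; apply: measurable_funM => //; exact: measurable_cst.
    - by move=> w; apply: mulr_ge0.
    - move=> w; rewrite (mulrC dl) -mulrDr; apply: ler_wpM2l => //.
      by have [_ _ h _] := gdP _ (X0 w); lra.
  have mdg : measurable_fun setT (fun w => dl * gamma (X w)).
    by apply: measurable_funM => //; exact: measurable_cst.
  have dg0 : forall w, 0 <= dl * gamma (X w) by move=> w; apply: mulr_ge0 => //; apply: ltW.
  have e := intD _ _ _ P (fun w => gamma (X w) * gd (X w)) (fun w => dl * gamma (X w)) mI mdg I0 dg0.
  rewrite e (intgam _ (ltW dl0)) in h.
  have h1 := leE_l _ _ _ _ hEX h; rewrite hr -EFinD lee_fin in h1.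
  by rewrite hr lee_fin; lra.
have Vgd : VaR P p (fun w => gd (X w)) <= v - dl.
  have [_ _ _ _ vv] := VaRg gd Ggd; apply: vv.
  apply: (le_trans Pv); apply: le_measure; rewrite ?inE.
  - exact: mpre.
  - by apply: mpre => //; exact: mgdX.
  move=> w /itvP h; apply/itvP; have [_ _ _ h'] := gdP _ (X0 w); exact: h'.
apply: (le_lt_trans (qle gd Ggd)); apply: (le_lt_trans Vgd); lra.
Qed.
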